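(* Let $N^h\ge 2$ be an integer and $h=1/N^h$. Let $\lambda_j=j^2\pi^2$ be the $j$-th exact eigenvalue of $-u''=\lambda u$ on $(0,1)$ with $u(0)=u(1)=0$, and let $\lambda^h_{gs,j}$ be the $j$-th approximate eigenvalue (eigenvalues sorted in nondecreasing order, counting multiplicity) of the linear GSFEM generalized matrix eigenvalue problem $(\mathbf{K}-\eta_K\mathbf{S})\mathbf{U}=\lambda^h(\mathbf{M}+\eta_M\mathbf{S}_g)\mathbf{U}$ described in the context, with $\eta_K=\frac{1}{12}$ and $\eta_M=\frac{1}{360}$. Then \[ \frac{|\lambda^h_{gs,j}-\lambda_j|}{\lambda_j}<\frac{1}{3024}(j\pi h)^6\qquad\text{for all } j\in\{1,\dots,N^h-1\}. \]
   Context: Setting (linear finite elements, generalized SoftFEM, in 1D): Let $x_k=kh$, $k=0,\dots,N^h$, be a uniform mesh of $[0,1]$. Let $V^h$ be the space of continuous functions on $[0,1]$ that are affine on each $[x_{k-1},x_k]$ and vanish at $0$ and $1$, with hat basis $\phi_k$, $k=1,\dots,N^h-1$, $\phi_k(x_l)=\delta_{kl}$. For $v\in V^h$ and an interior node $x_k$ let $[\![v']\!](x_k)=v'(x_k^-)-v'(x_k^+)$. Define $a(v,w)=\int_0^1 v'w'\,dx$, $b(v,w)=\int_0^1 vw\,dx$, $s(v,w)=\sum_{k=1}^{N^h-1} h\,[\![v']\!](x_k)[\![w']\!](x_k)$, $s_g(v,w)=\sum_{k=1}^{N^h-1} h^3\,[\![v']\!](x_k)[\![w']\!](x_k)$, and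 the matrices $\mathbf{K}_{kl}=a(\phi_l,\phi_k)$, $\mathbf{M}_{kl}=b(\phi_l,\phi_k)$, $\mathbf{S}_{kl}=s(\phi_l,\phi_k)$, $(\mathbf{S}_g)_{kl}=s_g(\phi_l,\phi_k)$. Explicitly, $\mathbf{K}=\frac1h\,\mathrm{tridiag}(-1,2,-1)$, $\mathbf{M}=h\,\mathrm{tridiag}(\tfrac16,\tfrac23,\tfrac16)$, $\mathbf{S}=\frac1h$ times the symmetric pentadiagonal matrix with rows $(1,-4,6,-4,1)$ except that the first and last diagonal entries are $5$, and $\mathbf{S}_g=h^2\mathbf{S}$; all are $(N^h-1)\times(N^h-1)$. *)

(* Defs.v *)
From HB Require Import structures.
From mathcomp Require Import all_boot all_order all_algebra.
From mathcomp Require Import all_classical all_reals all_analysis.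
Set Implicit Arguments. Unset Strict Implicit. Unset Printing Implicit Defensive.
Import Order.TTheory GRing.Theory Num.Theory.
Local Open Scope ring_scope.

Section GSFEM.
Variable R : realType.
Variable N : nat.  (* N = N^h, the number of mesh intervals *)

(* number of interior nodes / degrees of freedom; index i : 'I_(N.-1)
   corresponds to the interior node x_{i+1} and hat function phi_{i+1} *)
Definition ndof := N.-1.
Definition meshh : R := (N%:R)^-1.

Definition tridiag (d o : R) (i j : 'I_ndof) : R :=
  if i == j :> nat then d
  else if (i.+1 == j :> nat) || (j.+1 == i :> nat) then o else 0.

(* stiffness K_{kl} = a(phi_l, phi_k) = (1/h) tridiag(-1,2,-1) *)
Definition Kmx : 'M[R]_ndof :=
  \matrix_(i, j) (meshh^-1 * tridiag 2 (-1) i j).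
(* mass M_{kl} = b(phi_l, phi_k) = h tridiag(1/6,2/3,1/6) *)
Definition Mmx : 'M[R]_ndof :=
  \matrix_(i, j) (meshh * tridiag (2/3) (1/6) i j).

(* jump [[phi_k']](x_m) = phi_k'(x_m^-) - phi_k'(x_m^+) at interior node m
   (m, k given as indices in 'I_ndof) *)
Definition jump (m k : 'I_ndof) : R := meshh^-1 * tridiag 2 (-1) m k.

(* S_{kl} = s(phi_l, phi_k) = sum_m h [[phi_l']](x_m) [[phi_k']](x_m) *)
Definition Smx : 'M[R]_ndof :=
  \matrix_(k, l) \sum_(m < ndof) meshh * jump m l * jump m k.
(* (S_g)_{kl} = s_g(phi_l, phi_k) = sum_m h^3 [[phi_l']](x_m) [[phi_k']](x_m) *)
Definition Sgmx : 'M[R]_ndof :=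
  \matrix_(k, l) \sum_(m < ndof) meshh ^+ 3 * jump m l * jump m k.

Definition etaK : R := 1 / 12.
Definition etaM : R := 1 / 360.

Definition Agsfem : 'M[R]_ndof := Kmx - etaK *: Smx.
Definition Bgsfem : 'M[R]_ndof := Mmx + etaM *: Sgmx.

Definition gsfem_charpoly : {poly R} :=
  \det (map_mx polyC Agsfem - 'X *: map_mx polyC Bgsfem).

Definition gsfem_sorted_eigenvalues (s : seq R) : Prop :=
  [/\ size s = ndof, sorted <=%R s, gsfem_charpoly != 0
    & gsfem_charpoly = lead_coef gsfem_charpoly *: \prod_(x <- s) ('X - x%:P)].

End GSFEM.

Definition exact_eig (R : realType) (j : nat) : R := (j%:R) ^+ 2 * pi ^+ 2.

(* Main.v *)
Require Import Defs.
From HB Require Import structures.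
From mathcomp Require Import all_boot all_order all_algebra.
From mathcomp Require Import all_classical all_reals all_analysis.
From mathcomp Require Import ring lra zify.
Import Order.TTheory GRing.Theory Num.Theory.
Import numFieldNormedType.Exports.
Local Open Scope classical_set_scope.
Local Open Scope ring_scope.
Set Implicit Arguments. Unset Strict Implicit.

Section Trig.
Variable R : realType.

Lemma cos_taylor (n : nat) (x : R) : 0 < x ->
  x ^+ 2 < ((n.*2.+1) * (n.*2.+2))%:R ->
  0 < (-1) ^+ n * (cos x - \sum_(0 <= i < n) cos_coeff' x i).
Proof.
move=> x0 xn.
pose g := fun i => (-1) ^+ n * cos_coeff' x i.
have hg : series g @ \oo --> (-1) ^+ n * cos x.
  have -> : series g = (fun k => (-1)^+n * series (cos_coeff' x) k).
    by apply/funext => k; rewrite /series /= mulr_sumr.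
  apply: cvgM; first exact: cvg_cst.
  exact: cvg_cos_coeff'.
have := @lt_sum_lim_series R g n (cvgP _ hg).
rewrite (cvg_lim (@Rhausdorff R) hg) -mulr_sumr -subr_gt0 -mulrBr.
apply.
have key : forall m, (n <= m)%N -> ~~ odd (n + m) -> 0 < g m + g m.+1.
  move=> m nm om.
  rewrite /g /cos_coeff' -!exprnP -mulrDr.
  have -> : (-1) ^+ m.+1 = (-1 : R) * (-1) ^+ m by rewrite exprS.
  have -> : ((m.+1).*2)`!%:R = ((m.*2.+1) * (m.*2.+2))%:R * (m.*2)`!%:R :> R.
    by rewrite doubleS !factS !natrM mulrA [X in X * _ = _]mulrC. 
  have -> : x ^+ (m.+1).*2 = x ^+ m.*2 * x ^+ 2.
    by rewrite doubleS -exprD addn2.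
  have hA : 0 < x ^+ m.*2 / (m.*2)`!%:R.
    by rewrite divr_gt0 ?exprn_gt0 ?ltr0n ?fact_gt0.
  have hc : x ^+ 2 < ((m.*2.+1) * (m.*2.+2))%:R.
    apply: (lt_le_trans xn); rewrite ler_nat leq_mul //; rewrite ?ltnS ?leq_double //.
  set A := x ^+ m.*2 / (m.*2)`!%:R in hA *.
  set c := ((m.*2.+1) * (m.*2.+2))%:R in hc *.
  have c0 : 0 < c by apply: le_lt_trans hc; exact: sqr_ge0.
  have -> : (-1) ^+ n * ((-1) ^+ m * x ^+ m.*2 / (m.*2)`!%:R +
     - 1 * (-1) ^+ m * (x ^+ m.*2 * x ^+ 2) / (c * (m.*2)`!%:R))
     = (-1) ^+ (n + m) * (A * (1 - x ^+ 2 / c)).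
    rewrite exprD /A; field.
    have hm : (0:R) <= (m.*2)%:R := ler0n _ _.
    apply/and3P; split; rewrite ?pnatr_eq0 -?lt0n ?fact_gt0 //;
      apply: lt0r_neq0; lra.
  rewrite -signr_odd (negbTE om) expr0 mul1r mulr_gt0 // subr_gt0.
  by rewrite ltr_pdivrMr // mul1r.
move=> d; rewrite addnS; apply: key; first exact: leq_addr.
by rewrite addnA addnn oddD !odd_double.
Qed.

End Trig.
Section Trig2.
Variable R : realType.
Definition C6 (x : R) := 1 - x ^+ 2 / 2 + x ^+ 4 / 24 - x ^+ 6 / 720.

Lemma sum_cos4 (x : R) : \sum_(0 <= i < 4) cos_coeff' x i = C6 x.
Proof.
rewrite !big_nat_recr //= big_geq // /cos_coeff' -!exprnP /C6.
rewrite /= !expr0 !expr1.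
rewrite (_ : (0.*2)`! = 1)// (_ : (1.*2)`! = 2)// (_ : (2.*2)`! = 24)// (_ : (3.*2)`! = 720)//.
rewrite (_ : 1.*2 = 2)%N // (_ : 2.*2 = 4)%N // (_ : 3.*2 = 6)%N //.
rewrite (_ : (-1) ^+ 2 = 1 :> R); last by rewrite sqrrN expr1n.
rewrite (_ : (-1) ^+ 3 = -1 :> R); last by rewrite -signr_odd.
by field.
Qed.

Lemma sum_cos5 (x : R) : \sum_(0 <= i < 5) cos_coeff' x i = C6 x + x ^+ 8 / (40320%N)%:R.
Proof.
rewrite big_nat_recr //= sum_cos4 /cos_coeff' -!exprnP.
rewrite (_ : (4.*2)`!%:R = (40320%N)%:R :> R); last first.
  by rewrite (_ : 4.*2 = 8)%N // !factS fact0 !natrM; ring.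
rewrite (_ : 4.*2 = 8)%N //.
rewrite (_ : (-1) ^+ 4 = 1 :> R); last by rewrite -signr_odd.
by rewrite mul1r.
Qed.

Lemma cos_lb (x : R) : 0 < x -> x ^+ 2 < 90 -> C6 x < cos x.
Proof.
move=> x0 x2; have := @cos_taylor R 4 x x0 x2.
by rewrite sum_cos4 (_ : (-1) ^+ 4 = 1 :> R) ?mul1r ?subr_gt0 // -signr_odd.
Qed.

Lemma cos_ub (x : R) : 0 < x -> x ^+ 2 < 132 -> cos x < C6 x + x ^+ 8 / (40320%N)%:R.
Proof.
move=> x0 x2; have := @cos_taylor R 5 x x0 x2.
rewrite sum_cos5 (_ : (-1) ^+ 5 = -1 :> R); last by rewrite -signr_odd.
by rewrite mulN1r opprB subr_gt0.
Qed.
End Trig2.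

Section Polys.
Variable R : realType.
Lemma pw_bound k {w d : R} : 0 <= w -> w <= d -> 0 <= w ^+ k /\ w ^+ k <= d ^+ k.
Proof. move=> w0 wd; split; first exact: exprn_ge0. by rewrite lerXn2r // ?nnegrE //; apply: le_trans wd. Qed.
Definition Q1 (T : R) := ((1%N)%:R / (6048%N)%:R) + (-(31%N)%:R / (604800%N)%:R) * T ^+ 1 + ((5%N)%:R / (870912%N)%:R) * T ^+ 2 + (-(107%N)%:R / (326592000%N)%:R) * T ^+ 3 + ((1081%N)%:R / (73156608000%N)%:R) * T ^+ 4 + (-(689%N)%:R / (1316818944000%N)%:R) * T ^+ 5 + ((29%N)%:R / (1975228416000%N)%:R) * T ^+ 6 + (-(1%N)%:R / (3950456832000%N)%:R) * T ^+ 7 + ((1%N)%:R / (442451165184000%N)%:R) * T ^+ 8.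
Lemma Q1_piece0 (T : R) : ((0%N)%:R / (1%N)%:R) <= T -> T <= ((64%N)%:R / (25%N)%:R) -> 0 < Q1 T.
Proof.
move=> h1 h2; have -> : Q1 T = ((1%N)%:R / (6048%N)%:R) + (-(31%N)%:R / (604800%N)%:R) * (T - ((0%N)%:R / (1%N)%:R)) ^+ 1 + ((5%N)%:R / (870912%N)%:R) * (T - ((0%N)%:R / (1%N)%:R)) ^+ 2 + (-(107%N)%:R / (326592000%N)%:R) * (T - ((0%N)%:R / (1%N)%:R)) ^+ 3 + ((1081%N)%:R / (73156608000%N)%:R) * (T - ((0%N)%:R / (1%N)%:R)) ^+ 4 + (-(689%N)%:R / (1316818944000%N)%:R) * (T - ((0%N)%:R / (1%N)%:R)) ^+ 5 + ((29%N)%:R / (1975228416000%N)%:R) * (T - ((0%N)%:R / (1%N)%:R)) ^+ 6 + (-(1%N)%:R / (3950456832000%N)%:R) * (T - ((0%N)%:R / (1%N)%:R)) ^+ 7 + ((1%N)%:R / (442451165184000%N)%:R) * (T - ((0%N)%:R / (1%N)%:R)) ^+ 8 by rewrite /Q1; field.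
have w0 : 0 <= T - ((0%N)%:R / (1%N)%:R) by lra.
have w1 : T - ((0%N)%:R / (1%N)%:R) <= ((64%N)%:R / (25%N)%:R) by lra.
move: (T - ((0%N)%:R / (1%N)%:R)) w0 w1 => w w0 w1.
have [p1 q1] := pw_bound 1 w0 w1.
have [p2 q2] := pw_bound 2 w0 w1.
have [p3 q3] := pw_bound 3 w0 w1.
have [p4 q4] := pw_bound 4 w0 w1.
have [p5 q5] := pw_bound 5 w0 w1.
have [p6 q6] := pw_bound 6 w0 w1.
have [p7 q7] := pw_bound 7 w0 w1.
have [p8 q8] := pw_bound 8 w0 w1.
lra.
Qed.

Lemma Q1_piece1 (T : R) : ((64%N)%:R / (25%N)%:R) <= T -> T <= ((96%N)%:R / (25%N)%:R) -> 0 < Q1 T.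
Proof.
move=> h1 h2; have -> : Q1 T = ((275408966697035509%N)%:R / (4120647583007812500000%N)%:R) + (-(18074844737455883%N)%:R / (659303613281250000000%N)%:R) * (T - ((64%N)%:R / (25%N)%:R)) ^+ 1 + ((56166430181431%N)%:R / (15069796875000000000%N)%:R) * (T - ((64%N)%:R / (25%N)%:R)) ^+ 2 + (-(124202246767%N)%:R / (602791875000000000%N)%:R) * (T - ((64%N)%:R / (25%N)%:R)) ^+ 3 + ((1447565351%N)%:R / (154314720000000000%N)%:R) * (T - ((64%N)%:R / (25%N)%:R)) ^+ 4 + (-(20396203%N)%:R / (61725888000000000%N)%:R) * (T - ((64%N)%:R / (25%N)%:R)) ^+ 5 + ((13037%N)%:R / (1234517760000000%N)%:R) * (T - ((64%N)%:R / (25%N)%:R)) ^+ 6 + (-(143%N)%:R / (691329945600000%N)%:R) * (T - ((64%N)%:R / (25%N)%:R)) ^+ 7 + ((1%N)%:R / (442451165184000%N)%:R) * (T - ((64%N)%:R / (25%N)%:R)) ^+ 8 by rewrite /Q1; field.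
have w0 : 0 <= T - ((64%N)%:R / (25%N)%:R) by lra.
have w1 : T - ((64%N)%:R / (25%N)%:R) <= ((32%N)%:R / (25%N)%:R) by lra.
move: (T - ((64%N)%:R / (25%N)%:R)) w0 w1 => w w0 w1.
have [p1 q1] := pw_bound 1 w0 w1.
have [p2 q2] := pw_bound 2 w0 w1.
have [p3 q3] := pw_bound 3 w0 w1.
have [p4 q4] := pw_bound 4 w0 w1.
have [p5 q5] := pw_bound 5 w0 w1.
have [p6 q6] := pw_bound 6 w0 w1.
have [p7 q7] := pw_bound 7 w0 w1.
have [p8 q8] := pw_bound 8 w0 w1.
lra.
Qed.

Lemma Q1_piece2 (T : R) : ((96%N)%:R / (25%N)%:R) <= T -> T <= ((128%N)%:R / (25%N)%:R) -> 0 < Q1 T.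
Proof.
move=> h1 h2; have -> : Q1 T = ((211648115016101%N)%:R / (5652465820312500000%N)%:R) + (-(1890385564187%N)%:R / (100488281250000000%N)%:R) * (T - ((96%N)%:R / (25%N)%:R)) ^+ 1 + ((991452433%N)%:R / (328125000000000%N)%:R) * (T - ((96%N)%:R / (25%N)%:R)) ^+ 2 + (-(1213071443%N)%:R / (7441875000000000%N)%:R) * (T - ((96%N)%:R / (25%N)%:R)) ^+ 3 + ((128777599%N)%:R / (17146080000000000%N)%:R) * (T - ((96%N)%:R / (25%N)%:R)) ^+ 4 + (-(5270969%N)%:R / (20575296000000000%N)%:R) * (T - ((96%N)%:R / (25%N)%:R)) ^+ 5 + ((10877%N)%:R / (1234517760000000%N)%:R) * (T - ((96%N)%:R / (25%N)%:R)) ^+ 6 + (-(127%N)%:R / (691329945600000%N)%:R) * (T - ((96%N)%:R / (25%N)%:R)) ^+ 7 + ((1%N)%:R / (442451165184000%N)%:R) * (T - ((96%N)%:R / (25%N)%:R)) ^+ 8 by rewrite /Q1; field.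
have w0 : 0 <= T - ((96%N)%:R / (25%N)%:R) by lra.
have w1 : T - ((96%N)%:R / (25%N)%:R) <= ((32%N)%:R / (25%N)%:R) by lra.
move: (T - ((96%N)%:R / (25%N)%:R)) w0 w1 => w w0 w1.
have [p1 q1] := pw_bound 1 w0 w1.
have [p2 q2] := pw_bound 2 w0 w1.
have [p3 q3] := pw_bound 3 w0 w1.
have [p4 q4] := pw_bound 4 w0 w1.
have [p5 q5] := pw_bound 5 w0 w1.
have [p6 q6] := pw_bound 6 w0 w1.
have [p7 q7] := pw_bound 7 w0 w1.
have [p8 q8] := pw_bound 8 w0 w1.
lra.
Qed.

Lemma Q1_piece3 (T : R) : ((128%N)%:R / (25%N)%:R) <= T -> T <= ((32%N)%:R / (5%N)%:R) -> 0 < Q1 T.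
Proof.
move=> h1 h2; have -> : Q1 T = ((915300161085109%N)%:R / (50872192382812500000%N)%:R) + (-(865757160726611%N)%:R / (73255957031250000000%N)%:R) * (T - ((128%N)%:R / (25%N)%:R)) ^+ 1 + ((37138419424759%N)%:R / (15069796875000000000%N)%:R) * (T - ((128%N)%:R / (25%N)%:R)) ^+ 2 + (-(8599584991%N)%:R / (66976875000000000%N)%:R) * (T - ((128%N)%:R / (25%N)%:R)) ^+ 3 + ((312463597%N)%:R / (51438240000000000%N)%:R) * (T - ((128%N)%:R / (25%N)%:R)) ^+ 4 + (-(12009899%N)%:R / (61725888000000000%N)%:R) * (T - ((128%N)%:R / (25%N)%:R)) ^+ 5 + ((997%N)%:R / (137168640000000%N)%:R) * (T - ((128%N)%:R / (25%N)%:R)) ^+ 6 + (-(37%N)%:R / (230443315200000%N)%:R) * (T - ((128%N)%:R / (25%N)%:R)) ^+ 7 + ((1%N)%:R / (442451165184000%N)%:R) * (T - ((128%N)%:R / (25%N)%:R)) ^+ 8 by rewrite /Q1; field.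
have w0 : 0 <= T - ((128%N)%:R / (25%N)%:R) by lra.
have w1 : T - ((128%N)%:R / (25%N)%:R) <= ((32%N)%:R / (25%N)%:R) by lra.
move: (T - ((128%N)%:R / (25%N)%:R)) w0 w1 => w w0 w1.
have [p1 q1] := pw_bound 1 w0 w1.
have [p2 q2] := pw_bound 2 w0 w1.
have [p3 q3] := pw_bound 3 w0 w1.
have [p4 q4] := pw_bound 4 w0 w1.
have [p5 q5] := pw_bound 5 w0 w1.
have [p6 q6] := pw_bound 6 w0 w1.
have [p7 q7] := pw_bound 7 w0 w1.
have [p8 q8] := pw_bound 8 w0 w1.
lra.
Qed.

Lemma Q1_piece4 (T : R) : ((32%N)%:R / (5%N)%:R) <= T -> T <= ((176%N)%:R / (25%N)%:R) -> 0 < Q1 T.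
Proof.
move=> h1 h2; have -> : Q1 T = ((70138424269%N)%:R / (10548857812500000%N)%:R) + (-(51410225191%N)%:R / (8439086250000000%N)%:R) * (T - ((32%N)%:R / (5%N)%:R)) ^+ 1 + ((1955265439%N)%:R / (964467000000000%N)%:R) * (T - ((32%N)%:R / (5%N)%:R)) ^+ 2 + (-(19326431%N)%:R / (192893400000000%N)%:R) * (T - ((32%N)%:R / (5%N)%:R)) ^+ 3 + ((1233671%N)%:R / (246903552000000%N)%:R) * (T - ((32%N)%:R / (5%N)%:R)) ^+ 4 + (-(71111%N)%:R / (493807104000000%N)%:R) * (T - ((32%N)%:R / (5%N)%:R)) ^+ 5 + ((293%N)%:R / (49380710400000%N)%:R) * (T - ((32%N)%:R / (5%N)%:R)) ^+ 6 + (-(19%N)%:R / (138265989120000%N)%:R) * (T - ((32%N)%:R / (5%N)%:R)) ^+ 7 + ((1%N)%:R / (442451165184000%N)%:R) * (T - ((32%N)%:R / (5%N)%:R)) ^+ 8 by rewrite /Q1; field.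
have w0 : 0 <= T - ((32%N)%:R / (5%N)%:R) by lra.
have w1 : T - ((32%N)%:R / (5%N)%:R) <= ((16%N)%:R / (25%N)%:R) by lra.
move: (T - ((32%N)%:R / (5%N)%:R)) w0 w1 => w w0 w1.
have [p1 q1] := pw_bound 1 w0 w1.
have [p2 q2] := pw_bound 2 w0 w1.
have [p3 q3] := pw_bound 3 w0 w1.
have [p4 q4] := pw_bound 4 w0 w1.
have [p5 q5] := pw_bound 5 w0 w1.
have [p6 q6] := pw_bound 6 w0 w1.
have [p7 q7] := pw_bound 7 w0 w1.
have [p8 q8] := pw_bound 8 w0 w1.
lra.
Qed.

Lemma Q1_piece5 (T : R) : ((176%N)%:R / (25%N)%:R) <= T -> T <= ((192%N)%:R / (25%N)%:R) -> 0 < Q1 T.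
Proof.
move=> h1 h2; have -> : Q1 T = ((1627667259046921%N)%:R / (457849731445312500000%N)%:R) + (-(794453494143409%N)%:R / (219767871093750000000%N)%:R) * (T - ((176%N)%:R / (25%N)%:R)) ^+ 1 + ((27831640024471%N)%:R / (15069796875000000000%N)%:R) * (T - ((176%N)%:R / (25%N)%:R)) ^+ 2 + (-(5891326037%N)%:R / (66976875000000000%N)%:R) * (T - ((176%N)%:R / (25%N)%:R)) ^+ 3 + ((78374279%N)%:R / (17146080000000000%N)%:R) * (T - ((176%N)%:R / (25%N)%:R)) ^+ 4 + (-(7553387%N)%:R / (61725888000000000%N)%:R) * (T - ((176%N)%:R / (25%N)%:R)) ^+ 5 + ((733%N)%:R / (137168640000000%N)%:R) * (T - ((176%N)%:R / (25%N)%:R)) ^+ 6 + (-(29%N)%:R / (230443315200000%N)%:R) * (T - ((176%N)%:R / (25%N)%:R)) ^+ 7 + ((1%N)%:R / (442451165184000%N)%:R) * (T - ((176%N)%:R / (25%N)%:R)) ^+ 8 by rewrite /Q1; field.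
have w0 : 0 <= T - ((176%N)%:R / (25%N)%:R) by lra.
have w1 : T - ((176%N)%:R / (25%N)%:R) <= ((16%N)%:R / (25%N)%:R) by lra.
move: (T - ((176%N)%:R / (25%N)%:R)) w0 w1 => w w0 w1.
have [p1 q1] := pw_bound 1 w0 w1.
have [p2 q2] := pw_bound 2 w0 w1.
have [p3 q3] := pw_bound 3 w0 w1.
have [p4 q4] := pw_bound 4 w0 w1.
have [p5 q5] := pw_bound 5 w0 w1.
have [p6 q6] := pw_bound 6 w0 w1.
have [p7 q7] := pw_bound 7 w0 w1.
have [p8 q8] := pw_bound 8 w0 w1.
lra.
Qed.

Lemma Q1_piece6 (T : R) : ((192%N)%:R / (25%N)%:R) <= T -> T <= ((224%N)%:R / (25%N)%:R) -> 0 < Q1 T.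
Proof.
move=> h1 h2; have -> : Q1 T = ((3722359020127%N)%:R / (1884155273437500000%N)%:R) + (-(3674714065097%N)%:R / (2713183593750000000%N)%:R) * (T - ((192%N)%:R / (25%N)%:R)) ^+ 1 + ((314212838279%N)%:R / (186046875000000000%N)%:R) * (T - ((192%N)%:R / (25%N)%:R)) ^+ 2 + (-(1713108653%N)%:R / (22325625000000000%N)%:R) * (T - ((192%N)%:R / (25%N)%:R)) ^+ 3 + ((72203759%N)%:R / (17146080000000000%N)%:R) * (T - ((192%N)%:R / (25%N)%:R)) ^+ 4 + (-(2117177%N)%:R / (20575296000000000%N)%:R) * (T - ((192%N)%:R / (25%N)%:R)) ^+ 5 + ((5933%N)%:R / (1234517760000000%N)%:R) * (T - ((192%N)%:R / (25%N)%:R)) ^+ 6 + (-(79%N)%:R / (691329945600000%N)%:R) * (T - ((192%N)%:R / (25%N)%:R)) ^+ 7 + ((1%N)%:R / (442451165184000%N)%:R) * (T - ((192%N)%:R / (25%N)%:R)) ^+ 8 by rewrite /Q1; field.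
have w0 : 0 <= T - ((192%N)%:R / (25%N)%:R) by lra.
have w1 : T - ((192%N)%:R / (25%N)%:R) <= ((32%N)%:R / (25%N)%:R) by lra.
move: (T - ((192%N)%:R / (25%N)%:R)) w0 w1 => w w0 w1.
have [p1 q1] := pw_bound 1 w0 w1.
have [p2 q2] := pw_bound 2 w0 w1.
have [p3 q3] := pw_bound 3 w0 w1.
have [p4 q4] := pw_bound 4 w0 w1.
have [p5 q5] := pw_bound 5 w0 w1.
have [p6 q6] := pw_bound 6 w0 w1.
have [p7 q7] := pw_bound 7 w0 w1.
have [p8 q8] := pw_bound 8 w0 w1.
lra.
Qed.

Lemma Q1_piece7 (T : R) : ((224%N)%:R / (25%N)%:R) <= T -> T <= ((256%N)%:R / (25%N)%:R) -> 0 < Q1 T.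
Proof.
move=> h1 h2; have -> : Q1 T = ((26715242246629%N)%:R / (9343872070312500000%N)%:R) + ((11777991585991%N)%:R / (4485058593750000000%N)%:R) * (T - ((224%N)%:R / (25%N)%:R)) ^+ 1 + ((3086425576753%N)%:R / (2152828125000000000%N)%:R) * (T - ((224%N)%:R / (25%N)%:R)) ^+ 2 + (-(542193709%N)%:R / (9568125000000000%N)%:R) * (T - ((224%N)%:R / (25%N)%:R)) ^+ 3 + ((188402237%N)%:R / (51438240000000000%N)%:R) * (T - ((224%N)%:R / (25%N)%:R)) ^+ 4 + (-(4299563%N)%:R / (61725888000000000%N)%:R) * (T - ((224%N)%:R / (25%N)%:R)) ^+ 5 + ((533%N)%:R / (137168640000000%N)%:R) * (T - ((224%N)%:R / (25%N)%:R)) ^+ 6 + (-(1%N)%:R / (10973491200000%N)%:R) * (T - ((224%N)%:R / (25%N)%:R)) ^+ 7 + ((1%N)%:R / (442451165184000%N)%:R) * (T - ((224%N)%:R / (25%N)%:R)) ^+ 8 by rewrite /Q1; field.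
have w0 : 0 <= T - ((224%N)%:R / (25%N)%:R) by lra.
have w1 : T - ((224%N)%:R / (25%N)%:R) <= ((32%N)%:R / (25%N)%:R) by lra.
move: (T - ((224%N)%:R / (25%N)%:R)) w0 w1 => w w0 w1.
have [p1 q1] := pw_bound 1 w0 w1.
have [p2 q2] := pw_bound 2 w0 w1.
have [p3 q3] := pw_bound 3 w0 w1.
have [p4 q4] := pw_bound 4 w0 w1.
have [p5 q5] := pw_bound 5 w0 w1.
have [p6 q6] := pw_bound 6 w0 w1.
have [p7 q7] := pw_bound 7 w0 w1.
have [p8 q8] := pw_bound 8 w0 w1.
lra.
Qed.

Lemma Q1_pos (T : R) : 0 <= T -> T <= ((256%N)%:R / (25%N)%:R) -> 0 < Q1 T.
Proof.
move=> hT0 hT1.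
have [h|/ltW hh0] := leP T ((64%N)%:R / (25%N)%:R); first by apply: Q1_piece0 => //; lra.
have [h|/ltW hh1] := leP T ((96%N)%:R / (25%N)%:R); first by apply: Q1_piece1 => //; lra.
have [h|/ltW hh2] := leP T ((128%N)%:R / (25%N)%:R); first by apply: Q1_piece2 => //; lra.
have [h|/ltW hh3] := leP T ((32%N)%:R / (5%N)%:R); first by apply: Q1_piece3 => //; lra.
have [h|/ltW hh4] := leP T ((176%N)%:R / (25%N)%:R); first by apply: Q1_piece4 => //; lra.
have [h|/ltW hh5] := leP T ((192%N)%:R / (25%N)%:R); first by apply: Q1_piece5 => //; lra.
have [h|/ltW hh6] := leP T ((224%N)%:R / (25%N)%:R); first by apply: Q1_piece6 => //; lra.
by apply: Q1_piece7 => //; lra.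
Qed.

Definition Q2 (T : R) := ((1%N)%:R / (2240%N)%:R) + (-(107%N)%:R / (1814400%N)%:R) * T ^+ 1 + ((53%N)%:R / (10886400%N)%:R) * T ^+ 2 + (-(31%N)%:R / (108864000%N)%:R) * T ^+ 3 + ((1%N)%:R / (87091200%N)%:R) * T ^+ 4 + (-(1%N)%:R / (2351462400%N)%:R) * T ^+ 5 + ((1%N)%:R / (141087744000%N)%:R) * T ^+ 6.
Lemma Q2_piece0 (T : R) : ((0%N)%:R / (1%N)%:R) <= T -> T <= ((128%N)%:R / (25%N)%:R) -> 0 < Q2 T.
Proof.
move=> h1 h2; have -> : Q2 T = ((1%N)%:R / (2240%N)%:R) + (-(107%N)%:R / (1814400%N)%:R) * (T - ((0%N)%:R / (1%N)%:R)) ^+ 1 + ((53%N)%:R / (10886400%N)%:R) * (T - ((0%N)%:R / (1%N)%:R)) ^+ 2 + (-(31%N)%:R / (108864000%N)%:R) * (T - ((0%N)%:R / (1%N)%:R)) ^+ 3 + ((1%N)%:R / (87091200%N)%:R) * (T - ((0%N)%:R / (1%N)%:R)) ^+ 4 + (-(1%N)%:R / (2351462400%N)%:R) * (T - ((0%N)%:R / (1%N)%:R)) ^+ 5 + ((1%N)%:R / (141087744000%N)%:R) * (T - ((0%N)%:R / (1%N)%:R)) ^+ 6 by rewrite /Q2; field.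
have w0 : 0 <= T - ((0%N)%:R / (1%N)%:R) by lra.
have w1 : T - ((0%N)%:R / (1%N)%:R) <= ((128%N)%:R / (25%N)%:R) by lra.
move: (T - ((0%N)%:R / (1%N)%:R)) w0 w1 => w w0 w1.
have [p1 q1] := pw_bound 1 w0 w1.
have [p2 q2] := pw_bound 2 w0 w1.
have [p3 q3] := pw_bound 3 w0 w1.
have [p4 q4] := pw_bound 4 w0 w1.
have [p5 q5] := pw_bound 5 w0 w1.
have [p6 q6] := pw_bound 6 w0 w1.
lra.
Qed.

Lemma Q2_piece1 (T : R) : ((128%N)%:R / (25%N)%:R) <= T -> T <= ((256%N)%:R / (25%N)%:R) -> 0 < Q2 T.
Proof.
move=> h1 h2; have -> : Q2 T = ((9242341428749%N)%:R / (38443359375000000%N)%:R) + (-(9110598931%N)%:R / (341718750000000%N)%:R) * (T - ((128%N)%:R / (25%N)%:R)) ^+ 1 + ((206996983%N)%:R / (114817500000000%N)%:R) * (T - ((128%N)%:R / (25%N)%:R)) ^+ 2 + (-(3914587%N)%:R / (27556200000000%N)%:R) * (T - ((128%N)%:R / (25%N)%:R)) ^+ 3 + ((1657%N)%:R / (489888000000%N)%:R) * (T - ((128%N)%:R / (25%N)%:R)) ^+ 4 + (-(61%N)%:R / (293932800000%N)%:R) * (T - ((128%N)%:R / (25%N)%:R)) ^+ 5 + ((1%N)%:R / (141087744000%N)%:R) * (T - ((128%N)%:R / (25%N)%:R)) ^+ 6 by rewrite /Q2; field.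
have w0 : 0 <= T - ((128%N)%:R / (25%N)%:R) by lra.
have w1 : T - ((128%N)%:R / (25%N)%:R) <= ((128%N)%:R / (25%N)%:R) by lra.
move: (T - ((128%N)%:R / (25%N)%:R)) w0 w1 => w w0 w1.
have [p1 q1] := pw_bound 1 w0 w1.
have [p2 q2] := pw_bound 2 w0 w1.
have [p3 q3] := pw_bound 3 w0 w1.
have [p4 q4] := pw_bound 4 w0 w1.
have [p5 q5] := pw_bound 5 w0 w1.
have [p6 q6] := pw_bound 6 w0 w1.
lra.
Qed.

Lemma Q2_pos (T : R) : 0 <= T -> T <= ((256%N)%:R / (25%N)%:R) -> 0 < Q2 T.
Proof.
move=> hT0 hT1.
have [h|/ltW hh0] := leP T ((128%N)%:R / (25%N)%:R); first by apply: Q2_piece0 => //; lra.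
by apply: Q2_piece1 => //; lra.
Qed.
End Polys.

Section Analytic.
Variable R : realType.
Definition fN (m : R) := m - m ^+ 2 / 12.
Definition fD (m : R) := 1 - m / 6 + m ^+ 2 / 360.
Definition muL (T : R) := T - T ^+ 2 / 12 + T ^+ 3 / 360 - T ^+ 4 / 20160.
Definition muU (T : R) := T - T ^+ 2 / 12 + T ^+ 3 / 360.

Lemma fD_gt0 m : 0 <= m -> m <= 5 -> 0 < fD m.
Proof. move=> h0 h1; rewrite /fD. nra. Qed.

Lemma f_mono x y : 0 <= x -> x <= y -> y <= 5 -> fN x * fD y <= fN y * fD x.
Proof.
move=> h0 h1 h2.
have E : fN y * fD x - fN x * fD y = (y - x) * ((1 - x/12) * (1 - y/12) + x * y * (1/90 - 1/144)).
  by rewrite /fN /fD; field.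
rewrite -subr_ge0 E; apply: mulr_ge0; first lra.
apply: addr_ge0; first by apply: mulr_ge0; lra.
by apply: mulr_ge0; [apply: mulr_ge0|]; lra.
Qed.

Lemma muL_ge0 T : 0 <= T -> T <= 256/25 -> 0 <= muL T.
Proof.
move=> h0 h1.
have -> : muL T = T * (1 - T / 12) + T ^+ 3 * (1 / 360 - T / 20160) by rewrite /muL; field.
apply: addr_ge0; apply: mulr_ge0; try exact: exprn_ge0; lra.
Qed.

Lemma muU_le5 T : 0 <= T -> T <= 256/25 -> muU T <= 5.
Proof.
move=> h0 h1.
have h3 : T ^+ 3 <= 256 / 25 * T ^+ 2.
  rewrite exprS; apply: ler_wpM2r; [exact: exprn_ge0| exact: h1].
have sq : 0 <= (T - 9) ^+ 2 := sqr_ge0 _.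
have E : (T - 9) ^+ 2 = T ^+ 2 - 18 * T + 81 by rewrite sqrrB; field.
rewrite E in sq.
rewrite /muU; lra.
Qed.

Lemma P1_id T : fN (muL T) - (T - T ^+ 4 / 3024) * fD (muL T) = T ^+ 4 * Q1 T.
Proof. rewrite /fN /fD /muL /Q1. field. done. Qed.

Lemma P2_id T : (T + T ^+ 4 / 3024) * fD (muU T) - fN (muU T) = T ^+ 4 * Q2 T.
Proof. rewrite /fN /fD /muU /Q2. field. done. Qed.


Lemma pi_le : pi <= 16/5 :> R.
Proof.
rewrite leNgt; apply/negP => h.
have hc : 0 < cos (8/5 : R).
  apply: cos_gt0_pihalf; have := @pi_gt0 R => hp; apply/andP; split; lra.
have := @cos_ub R (8/5) ltac:(lra) ltac:(lra).
rewrite /C6; lra.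
Qed.

Lemma ltdiv_l (A a b : R) : 0 < b -> A * b < a -> A < a / b.
Proof. by move=> b0 h; rewrite ltr_pdivlMr. Qed.
Lemma ltdiv_r (A a b : R) : 0 < b -> a < A * b -> a / b < A.
Proof. by move=> b0 h; rewrite ltr_pdivrMr. Qed.

Lemma err_bound (t : R) : 0 < t -> t <= 16/5 ->
  `| fN (2 - 2 * cos t) / fD (2 - 2 * cos t) - t ^+ 2 | < t ^+ 8 / 3024.
Proof.
move=> t0 t1.
have T0 : 0 < t ^+ 2 by exact: exprn_gt0.
have T1 : t ^+ 2 <= 256 / 25 by rewrite expr2; nra.
have hl := cos_lb t0 ltac:(lra).
have hu := cos_ub t0 ltac:(lra).
have EL : muL (t ^+ 2) = 2 - 2 * (C6 t + t ^+ 8 / (40320%N)%:R).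
  by rewrite /muL /C6; field.
have EU : muU (t ^+ 2) = 2 - 2 * C6 t by rewrite /muU /C6; field.
have E8 : t ^+ 8 = (t ^+ 2) ^+ 4 by rewrite -exprM.
rewrite E8.
move: hl hu EL EU; set T := t ^+ 2; set m := 2 - 2 * cos t => hl hu EL EU.
have mL : muL T <= m by rewrite EL /m; lra.
have mU : m <= muU T by rewrite EU /m; lra.
have L0 := muL_ge0 (ltW T0) T1.
have U5 := muU_le5 (ltW T0) T1.
have m0 : 0 <= m by apply: le_trans mL.
have m5 : m <= 5 by apply: le_trans U5.
have dL := fD_gt0 L0 (le_trans mL m5).
have dU := fD_gt0 (le_trans m0 mU) U5.
have dm := fD_gt0 m0 m5.
have q1 := Q1_pos (ltW T0) T1.
have q2 := Q2_pos (ltW T0) T1.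
have T4 : 0 < T ^+ 4 by exact: exprn_gt0.
have h1 : (T - T ^+ 4 / 3024) * fD (muL T) < fN (muL T).
  by rewrite -subr_gt0 P1_id; apply: mulr_gt0.
have h2 : fN (muU T) < (T + T ^+ 4 / 3024) * fD (muU T).
  by rewrite -subr_gt0 P2_id; apply: mulr_gt0.
have g1 := f_mono L0 mL m5.
have g2 := f_mono m0 mU U5.
rewrite ltr_distl; apply/andP; split.
  apply: ltdiv_l => //.
  rewrite -(ltr_pM2r dL) -mulrA [fD m * _]mulrC mulrA.
  apply: lt_le_trans g1; rewrite (ltr_pM2r dm); exact: h1.
apply: ltdiv_r => //.
rewrite -(ltr_pM2r dU) [_ * fD m * _]mulrAC.
apply: (le_lt_trans g2); rewrite (ltr_pM2r dm); exact: h2.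
Qed.
End Analytic.

Section Sums.
Variable R : realType.

Lemma sum_ind n (F : nat -> R) p :
  \sum_(l < n) ((p == l :> nat)%:R * F l) = if (p < n)%N then F p else 0.
Proof.
rewrite -(big_mkord xpredT (fun l => (p == l)%:R * F l)).
elim: n => [|n IH]; first by rewrite big_geq.
rewrite big_nat_recr //= IH.
have [lt|ge] := ltnP p n.
  by rewrite (ltn_trans lt (ltnSn n)) (ltn_eqF lt) mul0r addr0.
rewrite add0r ltnS; have [e|ne] := eqVneq p n.
  by rewrite e leqnn mul1r.
by rewrite mul0r; case: leqP => // pn; case/eqP: ne; apply/eqP; rewrite eqn_leq pn ge.
Qed.

Lemma tridiagE N (d o : R) (i j : 'I_(ndof N)) :
  tridiag d o i j = d * (i == j :> nat)%:R + o * (i.+1 == j :> nat)%:R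
                    + o * (j.+1 == i :> nat)%:R.
Proof.
rewrite /tridiag.
move: (nat_of_ord i) (nat_of_ord j) => a b.
case: eqP => h1; case: eqP => h2; case: eqP => h3; rewrite /=; try lia; ring.
Qed.

Lemma tridiagC N (d o : R) (i j : 'I_(ndof N)) : tridiag d o i j = tridiag d o j i.
Proof. by rewrite /tridiag eq_sym orbC. Qed.

Lemma tridiag_sum N (d o : R) (k : 'I_(ndof N)) (g : nat -> R) :
  (1 <= N)%N -> g 0%N = 0 -> g N = 0 ->
  \sum_(l < ndof N) tridiag d o k l * g l.+1 = d * g k.+1 + o * (g k + g k.+2).
Proof.
move=> N1 g0 gN.
under eq_bigr => l _ do rewrite tridiagE !mulrDl -!mulrA.
rewrite !big_split /= -!mulr_sumr !(sum_ind _ (fun l => g l.+1)) ltn_ord.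
have hk := ltn_ord k.
have -> : \sum_(i < ndof N) (i.+1 == k :> nat)%:R * g i.+1 = g k.
  case: (posnP k) => [k0|kpos].
    rewrite k0 g0 big1 // => l _; by rewrite mul0r.
  rewrite (eq_bigr (fun l : 'I_(ndof N) => ((k.-1 == l :> nat)%:R * g l.+1))); last first.
    move=> l _; congr (_%:R * _).
    by case: eqP => H; case: eqP => Hp //; lia.
  rewrite (sum_ind _ (fun l => g l.+1)) (leq_ltn_trans (leq_pred _) hk) prednK //.
case: ltnP => kn; first by ring.
have -> : k.+2 = N by move: hk kn; rewrite /ndof; lia.
by rewrite gN; ring.
Qed.
End Sums.

Section Eig.
Variable R : realType.
Variable N : nat.

Definition alpha (i : nat) : R := (i.+1)%:R * pi / N%:R.
Definition sv (i m : nat) : R := sin (m%:R * alpha i).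
Definition Vm : 'M[R]_(ndof N) := \matrix_(l, i) sv i l.+1.
Definition mu (i : nat) : R := 2 - 2 * cos (alpha i).

Lemma sv0 i : sv i 0 = 0.
Proof. by rewrite /sv mul0r sin0. Qed.

Lemma svN i : (0 < N)%N -> sv i N = 0.
Proof.
move=> N0; rewrite /sv /alpha.
have -> : N%:R * ((i.+1)%:R * pi / N%:R) = 0 + pi *+ i.+1 :> R.
  rewrite add0r -mulr_natl; field; by rewrite pnatr_eq0 -lt0n.
by rewrite (alternatingn (@sinDpi R)) sin0 mulr0.
Qed.

Lemma sv_rec i m : sv i m + sv i m.+2 = 2 * cos (alpha i) * sv i m.+1.
Proof.
rewrite /sv.
have -> : m%:R * alpha i = m.+1%:R * alpha i - alpha i by rewrite -natr1; ring.
have -> : m.+2%:R * alpha i = m.+1%:R * alpha i + alpha i.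
  by rewrite (_ : m.+2%:R = m.+1%:R + 1 :> R) ?natr1 //; ring.
rewrite sinB sinD; ring.
Qed.

Lemma eig (d o : R) (k i : 'I_(ndof N)) : (1 <= N)%N ->
  \sum_(l < ndof N) tridiag d o k l * Vm l i = (d + 2 * o * cos (alpha i)) * Vm k i.
Proof.
move=> N1.
under eq_bigr => l _ do rewrite mxE.
rewrite (tridiag_sum (g := sv i) d o k N1 (sv0 i) (svN i N1)) sv_rec mxE; ring.
Qed.

Definition hh : R := meshh R N.

Lemma JV (m i : 'I_(ndof N)) : (1 <= N)%N ->
  \sum_(l < ndof N) jump R m l * Vm l i = hh^-1 * mu i * Vm m i.
Proof.
move=> N1; rewrite /jump.
under eq_bigr => l _ do rewrite -mulrA.
by rewrite -mulr_sumr eig // /mu /hh; ring.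
Qed.

Lemma JVt (k i : 'I_(ndof N)) : (1 <= N)%N ->
  \sum_(m < ndof N) jump R m k * Vm m i = hh^-1 * mu i * Vm k i.
Proof.
move=> N1; rewrite -JV //; apply: eq_bigr => m _; by rewrite /jump tridiagC.
Qed.

Lemma S_gen (c : R) (k i : 'I_(ndof N)) : (1 <= N)%N ->
  \sum_(l < ndof N) (\sum_(m < ndof N) c * jump R m l * jump R m k) * Vm l i
  = c * hh^-2 * mu i ^+ 2 * Vm k i.
Proof.
move=> N1.
under eq_bigr => l _ do rewrite mulr_suml.
rewrite exchange_big /=.
have inner m : \sum_(l < ndof N) c * jump R m l * jump R m k * Vm l i
    = c * jump R m k * (hh^-1 * mu i * Vm m i).
  rewrite -JV // mulr_sumr; apply: eq_bigr => l _; ring.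
under eq_bigr => m _ do rewrite inner.
have -> : \sum_(m < ndof N) c * jump R m k * (hh^-1 * mu i * Vm m i)
   = c * hh^-1 * mu i * \sum_(m < ndof N) jump R m k * Vm m i.
  rewrite mulr_sumr; apply: eq_bigr => m _; ring.
rewrite JVt //; rewrite expr2 invfM; ring.
Qed.

Definition aa (i : nat) : R := hh^-1 * fN (mu i).
Definition bb (i : nat) : R := hh * fD (mu i).

Lemma hh_gt0 : (0 < N)%N -> 0 < hh.
Proof. by move=> N0; rewrite /hh /meshh invr_gt0 ltr0n. Qed.

Lemma K_V (k i : 'I_(ndof N)) : (1 <= N)%N ->
  (Kmx R N *m Vm) k i = hh^-1 * mu i * Vm k i.
Proof.
move=> N1; rewrite mxE.
under eq_bigr => l _ do rewrite [Kmx R N k l]mxE -mulrA.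
by rewrite -mulr_sumr (eig _ _ _ _ N1) /mu /hh; ring.
Qed.

Lemma M_V (k i : 'I_(ndof N)) : (1 <= N)%N ->
  (Mmx R N *m Vm) k i = hh * (1 - mu i / 6) * Vm k i.
Proof.
move=> N1; rewrite mxE.
under eq_bigr => l _ do rewrite [Mmx R N k l]mxE -mulrA.
by rewrite -mulr_sumr (eig _ _ _ _ N1) /mu /hh; field.
Qed.

Lemma S_V (k i : 'I_(ndof N)) : (1 <= N)%N ->
  (Smx R N *m Vm) k i = hh * hh^-2 * mu i ^+ 2 * Vm k i.
Proof.
move=> N1; rewrite mxE.
under eq_bigr => l _ do rewrite [Smx R N k l]mxE.
by rewrite S_gen.
Qed.

Lemma Sg_V (k i : 'I_(ndof N)) : (1 <= N)%N ->
  (Sgmx R N *m Vm) k i = hh ^+ 3 * hh^-2 * mu i ^+ 2 * Vm k i.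
Proof.
move=> N1; rewrite mxE.
under eq_bigr => l _ do rewrite [Sgmx R N k l]mxE.
by rewrite S_gen.
Qed.

Lemma A_V (k i : 'I_(ndof N)) : (1 <= N)%N ->
  (Agsfem R N *m Vm) k i = aa i * Vm k i.
Proof.
move=> N1.
rewrite /Agsfem mulmxBl -scalemxAl.
have -> : (Kmx R N *m Vm - etaK R *: (Smx R N *m Vm)) k i
   = (Kmx R N *m Vm) k i - etaK R * (Smx R N *m Vm) k i by rewrite !mxE.
rewrite K_V // S_V // /aa /fN /etaK.
have h0 : hh != 0 by rewrite gt_eqF // hh_gt0.
by field.
Qed.

Lemma B_V (k i : 'I_(ndof N)) : (1 <= N)%N ->
  (Bgsfem R N *m Vm) k i = bb i * Vm k i.
Proof.
move=> N1.
rewrite /Bgsfem mulmxDl -scalemxAl.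
have -> : (Mmx R N *m Vm + etaM R *: (Sgmx R N *m Vm)) k i
   = (Mmx R N *m Vm) k i + etaM R * (Sgmx R N *m Vm) k i by rewrite !mxE.
rewrite M_V // Sg_V // /bb /fD /etaM.
have h0 : hh != 0 by rewrite gt_eqF // hh_gt0.
by field.
Qed.

End Eig.

Section Gram.
Variable R : realType.
Variable N : nat.

Lemma alpha_bounds (i : nat) : (i < ndof N)%N -> 0 < alpha R N i < pi.
Proof.
move=> hi; have N0 : (0 < N)%N by move: hi; rewrite /ndof; lia.
have Nr : (0 : R) < N%:R by rewrite ltr0n.
have pi0 := @pi_gt0 R.
rewrite /alpha; apply/andP; split.
  by rewrite divr_gt0 // mulr_gt0 // ltr0n.
rewrite ltr_pdivrMr // mulrC ltr_pM2l // ltr_nat.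
by move: hi; rewrite /ndof; lia.
Qed.

Lemma alpha_lt (i j : nat) : (i < j)%N -> (0 < N)%N -> alpha R N i < alpha R N j.
Proof.
move=> ij N0; rewrite /alpha ltr_pM2r ?invr_gt0 ?ltr0n // ltr_pM2r ?pi_gt0 //.
by rewrite ltr_nat.
Qed.

Lemma mu_lt (i j : nat) : (i < j)%N -> (j < ndof N)%N -> mu R N i < mu R N j.
Proof.
move=> ij jn; have N0 : (0 < N)%N by move: jn; rewrite /ndof; lia.
have in_ : (i < ndof N)%N by apply: ltn_trans jn.
have /andP[ai1 ai2] := alpha_bounds in_.
have /andP[aj1 aj2] := alpha_bounds jn.
have : cos (alpha R N j) < cos (alpha R N i).
  rewrite ltr_cos ?alpha_lt // in_itv /= ?ltW //; apply/andP; split; exact: ltW.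
rewrite /mu; lra.
Qed.

Lemma Teig (k i : 'I_(ndof N)) : (1 <= N)%N ->
  \sum_(l < ndof N) tridiag 2 (-1) k l * Vm R N l i = mu R N i * Vm R N k i.
Proof. by move=> N1; rewrite eig // /mu; congr (_ * _); ring. Qed.

Lemma gram_off (i j : 'I_(ndof N)) : (1 <= N)%N -> i != j ->
  \sum_(k < ndof N) Vm R N k i * Vm R N k j = 0.
Proof.
move=> N1 ij.
set G := \sum_(k < ndof N) _.
have E : mu R N j * G = mu R N i * G.
  rewrite /G mulr_sumr.
  transitivity (\sum_(k < ndof N) Vm R N k i * \sum_(l < ndof N) tridiag 2 (-1) k l * Vm R N l j).
    by apply: eq_bigr => k _; rewrite Teig //; ring.
  under eq_bigr => k _ do rewrite mulr_sumr.
  rewrite exchange_big /= mulr_sumr; apply: eq_bigr => l _.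
  transitivity ((\sum_(k < ndof N) tridiag 2 (-1) l k * Vm R N k i) * Vm R N l j).
    by rewrite mulr_suml; apply: eq_bigr => k _; rewrite tridiagC; ring.
  by rewrite Teig //; ring.
have : (mu R N j - mu R N i) * G = 0 by rewrite mulrBl E subrr.
move/eqP; rewrite mulf_eq0 => /orP[|/eqP //].
rewrite subr_eq0 => /eqP hm; exfalso.
have [lt|gt|eq] := ltngtP i j.
- by have := mu_lt lt (ltn_ord j); rewrite hm ltxx.
- by have := mu_lt gt (ltn_ord i); rewrite hm ltxx.
- by move/eqP: ij; apply; apply: val_inj.
Qed.

Lemma gram_diag (i : 'I_(ndof N)) : (1 <= N)%N ->
  0 < \sum_(k < ndof N) Vm R N k i * Vm R N k i.
Proof.
move=> N1.
have n0 : (0 < ndof N)%N by apply: leq_ltn_trans (ltn_ord i).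
pose k0 : 'I_(ndof N) := Ordinal n0.
rewrite (bigD1 k0) //=.
have h1 : 0 < Vm R N k0 i * Vm R N k0 i.
  rewrite -expr2 exprn_gt0 // mxE /sv mul1r.
  by case/andP: (alpha_bounds (ltn_ord i)) => a1 a2; apply: sin_gt0_pi; apply/andP.
have h2 : 0 <= \sum_(k < ndof N | k != k0) Vm R N k i * Vm R N k i.
  by apply: sumr_ge0 => k _; rewrite -expr2 sqr_ge0.
lra.
Qed.

Lemma detV_neq0 : (1 <= N)%N -> \det (Vm R N) != 0.
Proof.
move=> N1.
have G : (Vm R N)^T *m Vm R N = diag_mx (\row_i \sum_(k < ndof N) Vm R N k i * Vm R N k i).
  have Gij i j : ((Vm R N)^T *m Vm R N) i j = \sum_(k < ndof N) Vm R N k i * Vm R N k j.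
    by rewrite mxE; apply: eq_bigr => k _; rewrite mxE.
  apply/matrixP => i j; rewrite Gij !mxE.
  have [->|ij] := eqVneq i j; first by rewrite mulr1n.
  by rewrite mulr0n (gram_off N1 ij).
have : \det ((Vm R N)^T *m Vm R N) != 0.
  rewrite G det_diag; apply/prodf_neq0 => i _; rewrite mxE.
  by rewrite gt_eqF // gram_diag.
by rewrite det_mulmx det_tr mulf_eq0 orbb.
Qed.

End Gram.

Section Final.
Variable R : realType.
Variable N : nat.

Lemma AV_mat : (1 <= N)%N ->
  Agsfem R N *m Vm R N = Vm R N *m diag_mx (\row_i aa R N i).
Proof. by move=> N1; apply/matrixP => k i; rewrite A_V // mul_mx_diag !mxE mulrC. Qed.

Lemma BV_mat : (1 <= N)%N ->
  Bgsfem R N *m Vm R N = Vm R N *m diag_mx (\row_i bb R N i).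
Proof. by move=> N1; apply/matrixP => k i; rewrite B_V // mul_mx_diag !mxE mulrC. Qed.

Lemma charpolyE : (1 <= N)%N ->
  gsfem_charpoly R N = \prod_(i < ndof N) ((aa R N i)%:P - 'X * (bb R N i)%:P).
Proof.
move=> N1.
have hV : (\det (Vm R N))%:P != 0 by rewrite polyC_eq0 detV_neq0.
apply: (mulIf hV).
rewrite /gsfem_charpoly -(det_map_mx polyC) -det_mulmx mulmxBl -scalemxAl -!map_mxM.
rewrite AV_mat // BV_mat // !map_mxM scalemxAr -mulmxBr det_mulmx mulrC; congr (_ * _).
rewrite !map_diag_mx.
have -> : diag_mx (map_mx polyC (\row_(i < ndof N) aa R N i)) - 'X *: diag_mx (map_mx polyC (\row_(i < ndof N) bb R N i))
   = diag_mx (\row_i ((aa R N i)%:P - 'X * (bb R N i)%:P)).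
  apply/matrixP => p q; rewrite !mxE.
  by case: eqP => _; rewrite ?mulr1n ?mulr0n ?polyC0 ?mulr0 ?subr0.
by rewrite det_diag; apply: eq_bigr => i _; rewrite mxE.
Qed.

End Final.

Lemma div_mono (R : realType) (a b c d : R) : 0 < b -> 0 < d -> a * d <= c * b -> a / b <= c / d.
Proof. by move=> b0 d0 h; rewrite ler_pdivrMr // mulrAC ler_pdivlMr. Qed.

Unset Implicit Arguments.
Theorem theorem1 (R : realType) (N : nat) (HN : (2 <= N)%N) :
  exists s : seq R, gsfem_sorted_eigenvalues N s /\
    forall j : nat, (1 <= j <= N.-1)%N ->
      `|s`_j.-1 - exact_eig R j| / exact_eig R j
        < (j%:R * pi * meshh R N) ^+ 6 / 3024.
Proof.
have N1 : (1 <= N)%N by apply: ltnW.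
have hh0 : 0 < hh R N := hh_gt0 R N1.
pose lam i := aa R N i / bb R N i.
have mu_rng i : 0 <= mu R N i <= 4.
  rewrite /mu; have := @cos_geN1 R (alpha R N i); have := @cos_le1 R (alpha R N i).
  move=> h1 h2; apply/andP; split; lra.
have fD_pos i : 0 < fD (mu R N i).
  by case/andP: (mu_rng i) => h1 h2; apply: fD_gt0 => //; lra.
have bb_pos i : 0 < bb R N i by rewrite /bb mulr_gt0.
have lamE i : lam i = fN (mu R N i) / fD (mu R N i) / hh R N ^+ 2.
  rewrite /lam /aa /bb; have := fD_pos i; have := hh0 => a b.
  by field; rewrite !gt_eqF.
exists (mkseq lam (ndof N)); split.
  have CE := charpolyE R N1.
  have fac i : (aa R N i)%:P - 'X * (bb R N i)%:P = (- bb R N i) *: ('X - (lam i)%:P).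
    rewrite -mul_polyC polyCN.
    have -> : (aa R N i)%:P = (lam i)%:P * (bb R N i)%:P.
      by rewrite -polyCM /lam divfK // gt_eqF.
    ring.
  have PE : \prod_(x <- mkseq lam (ndof N)) ('X - x%:P)
          = \prod_(i < ndof N) ('X - (lam i)%:P).
    by rewrite /mkseq big_map -(big_mkord xpredT (fun i => 'X - (lam i)%:P)) /index_iota subn0.
  have CE2 : gsfem_charpoly R N
     = (\prod_(i < ndof N) - bb R N i) *: \prod_(x <- mkseq lam (ndof N)) ('X - x%:P).
    by rewrite CE PE -scaler_prod; apply: eq_bigr => i _; rewrite fac.
  have mon : \prod_(x <- mkseq lam (ndof N)) ('X - x%:P) \is monic
    by exact: monic_prod_XsubC.
  have c0 : \prod_(i < ndof N) - bb R N i != 0.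
    by apply/prodf_neq0 => i _; rewrite oppr_eq0 gt_eqF.
  have LC : lead_coef (gsfem_charpoly R N) = \prod_(i < ndof N) - bb R N i.
    by rewrite CE2 lead_coefZ (monicP mon) mulr1.
  split.
  - by rewrite size_mkseq.
  - rewrite /mkseq.
    apply: (@homo_sorted_in _ _ [pred i | (i < ndof N)%N] _ leq).
    + move=> i j; rewrite !inE => hi hj ij.
      rewrite !lamE ler_pM2r; last by rewrite invr_gt0 exprn_gt0.
      rewrite leq_eqVlt in ij; case/orP: ij => [/eqP -> //|ij].
      have ml := mu_lt R ij hj.
      case/andP: (mu_rng i) => h1 _; case/andP: (mu_rng j) => _ h2.
      apply: div_mono => //; apply: f_mono; lra.
    + by apply/allP => x; rewrite mem_iota add0n inE.
    + exact: iota_sorted.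
  - by rewrite CE2 scale_poly_eq0 negb_or c0 monic_neq0.
  - by rewrite LC.
move=> j /andP[j1 jn].
have jn' : (j.-1 < ndof N)%N by rewrite /ndof; lia.
rewrite nth_mkseq // lamE.
set t := alpha R N j.-1.
have tE : t = j%:R * pi * meshh R N by rewrite /t /alpha prednK.
have /andP[t0 tpi] := alpha_bounds R jn'.
have t16 : t <= 16 / 5 by apply: le_trans (ltW tpi) (pi_le R).
have eb := err_bound t0 t16.
rewrite -tE.
have eE : exact_eig R j = t ^+ 2 / hh R N ^+ 2.
  rewrite /exact_eig tE /hh; have := hh0 => a.
  rewrite /hh in a; field; by rewrite gt_eqF.
rewrite eE.
rewrite /mu -/t.
set F := fN _ / fD _ in eb *.
set H := hh R N ^+ 2.
have H0 : 0 < H by rewrite /H exprn_gt0.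
have T0 : 0 < t ^+ 2 by rewrite exprn_gt0.
have -> : (F / H - t ^+ 2 / H) = (F - t ^+ 2) * H^-1.
  by rewrite /H; field; rewrite gt_eqF // exprn_gt0.
have Hi : 0 <= H^-1 by rewrite invr_ge0 ltW.
rewrite normrM (ger0_norm Hi).
have -> : `|F - t ^+ 2| * H^-1 / (t ^+ 2 / H) = `|F - t ^+ 2| / t ^+ 2.
  by field; rewrite !gt_eqF.
rewrite ltr_pdivrMr //.
by have -> : t ^+ 6 / 3024 * t ^+ 2 = t ^+ 8 / 3024 by field.
Qed.
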